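(* Let $\mathcal{T}$ be the twisted $N=2$ superconformal algebra (defined in the context), let $\lambda\in\mathbb{C}^*$, $\alpha\in\mathbb{C}$ and $t\in\{1,-1\}$. Let $V=\mathbb{C}[\partial^2]\oplus\partial\mathbb{C}[\partial^2]$ be the $\mathbb{Z}_2$-graded vector space with $V_{\bar0}=\mathbb{C}[\partial^2]$ and $V_{\bar1}=\partial\mathbb{C}[\partial^2]$. For $m\in\mathbb{Z}$, $r\in\frac12+\mathbb{Z}$, $p\in\frac12\mathbb{Z}$ and $f(\partial^2)\in\mathbb{C}[\partial^2]$ define $$L_mf(\partial^2)=\lambda^m(\partial^2+m\alpha)f(\partial^2+m),\qquad L_m\partial f(\partial^2)=\lambda^m\big(\partial^2+m(\alpha+\tfrac12)\big)\partial f(\partial^2+m),$$ $$I_rf(\partial^2)=-2t^{2r}\lambda^{r}\alpha f(\partial^2+r),\qquad I_r\partial f(\partial^2)=t^{2r}\lambda^{r}(1-2\alpha)\partial f(\partial^2+r),$$ $$G_pf(\partial^2)=t^{2p}\lambda^p\partial f(\partial^2+p),\qquad G_p\partial f(\partial^2)=(-t)^{2p}\lambda^p(\partial^2+2p\alpha)f(\partial^2+p).$$ Then these formulas make $V$ a $\mathcal{T}$-module (denoted $\mathcal{M}_t(\lambda,\alpha)$), and as a module over $\mathcal{U}(\mathfrak{h})$, $\mathfrak{h}=\mathbb{C}L_0\oplus\mathbb{C}G_0$, it is free of rank $1$.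
   Context: The twisted $N=2$ superconformal algebra $\mathcal{T}$ is the Lie superalgebra over $\mathbb{C}$ with basis $\{L_m, I_r, G_p\mid m\in\mathbb{Z}, r\in\frac12+\mathbb{Z}, p\in\frac12\mathbb{Z}\}$, even part spanned by the $L_m,I_r$, odd part spanned by the $G_p$, and with the only nonzero brackets $[L_m,L_n]=(m-n)L_{m+n}$, $[L_m,I_r]=-rI_{m+r}$, $[L_m,G_p]=(\frac m2-p)G_{m+p}$, $[I_r,G_p]=G_{r+p}$, and $[G_p,G_q]=(-1)^{2p}2L_{p+q}$ if $p+q\in\mathbb{Z}$, $[G_p,G_q]=(-1)^{2p+1}(p-q)I_{p+q}$ if $p+q\in\frac12+\mathbb{Z}$. A $\mathcal{T}$-module is a $\mathbb{Z}_2$-graded space $V$ with $\mathcal{T}_{\bar i}V_{\bar j}\subseteq V_{\bar i+\bar j}$ and $x(yv)-(-1)^{|x||y|}y(xv)=[x,y]v$. Here $\partial$ is a formal variable, $f(\partial^2+m)$ means the polynomial $f$ evaluated at $\partial^2+m$, and for $p\in\frac12\mathbb{Z}$, $\lambda^p$ means $(\lambda^{1/2})^{2p}$ for a fixed choice of square root $\lambda^{1/2}$. *)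

(* Defs.v *)
From HB Require Import structures.
From mathcomp Require Import all_boot all_order all_algebra.
From mathcomp Require Import complex.
From mathcomp Require Import reals.
Set Implicit Arguments. Unset Strict Implicit. Unset Printing Implicit Defensive.
Import Order.TTheory GRing.Theory Num.Theory.
Local Open Scope ring_scope.

(* Basis of the twisted N=2 superconformal algebra T:
   TL m  = L_m             (m : int)
   TI k  = I_{k + 1/2}     (k : int)   -- r = k + 1/2 ranges over 1/2 + Z
   TG n  = G_{n / 2}       (n : int)   -- p = n/2 ranges over (1/2) Z  *)
Inductive Tbasis := TL of int | TI of int | TG of int.

Definition Tpar (a : Tbasis) : bool := if a is TG _ then true else false.

Section Bracket.
Variable F : fieldType.

Definition half : F := 2^-1.
Definition Iidx (k : int) : F := k%:~R + half.
Definition Gidx (n : int) : F := n%:~R * half.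

(* [a, b] = c * e, returned as the pair (c, e); all brackets of basis
   elements are scalar multiples of a single basis element. *)
Definition Tbracket (a b : Tbasis) : F * Tbasis :=
  match a, b with
  | TL m, TL n => ((m - n)%:~R, TL (m + n))
  | TL m, TI k => (- Iidx k, TI (m + k))
  | TI k, TL m => (Iidx k, TI (m + k))
  | TL m, TG n => (m%:~R * half - Gidx n, TG (n + 2 * m))      (* [L_m,G_p] = (m/2-p) G_{m+p} *)
  | TG n, TL m => (- (m%:~R * half - Gidx n), TG (n + 2 * m))
  | TI k, TI l => (0, TL 0)
  | TI k, TG n => (1, TG (2 * k + 1 + n))                      (* [I_r,G_p] = G_{r+p} *)
  | TG n, TI k => (-1, TG (2 * k + 1 + n))
  | TG n1, TG n2 =>
      if ~~ odd (absz (n1 + n2))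
      then (2 * exprz (-1) n1, TL ((n1 + n2) %/ 2)%Z)               (* p+q integer *)
      else (exprz (-1) (n1 + 1) * (Gidx n1 - Gidx n2),
            TI ((n1 + n2 - 1) %/ 2)%Z)                          (* p+q in 1/2+Z *)
  end.

Definition Tsign (a b : Tbasis) : F := if Tpar a && Tpar b then -1 else 1.

Definition linearF (U W : lmodType F) (f : U -> W) :=
  forall (c : F) (u v : U), f (c *: u + v) = c *: f u + f v.

(* rho is a representation of the sub(super)algebra spanned by the basis
   elements in P (P must be closed under brackets), i.e. each rho a is linear
   and  rho a (rho b w) - (-1)^{|a||b|} rho b (rho a w) = rho [a,b] w. *)
Definition is_rep_on (P : pred Tbasis) (W : lmodType F) (rho : Tbasis -> W -> W) :=
  (forall a, P a -> linearF (rho a)) /\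
  (forall a b, P a -> P b -> forall w : W,
     rho a (rho b w) - Tsign a b *: rho b (rho a w)
       = (Tbracket a b).1 *: rho (Tbracket a b).2 w).

Definition is_T_module (W : lmodType F) (V0 V1 : pred W) (rho : Tbasis -> W -> W) :=
  is_rep_on predT rho /\
  (forall a w, w \in V0 -> rho a w \in (if Tpar a then V1 else V0)) /\
  (forall a w, w \in V1 -> rho a w \in (if Tpar a then V0 else V1)).

Definition in_h (a : Tbasis) : bool :=
  match a with TL m => m == 0 | TG n => n == 0 | _ => false end.

(* V is a free U(h)-module of rank 1: there is v in V such that for every
   U(h)-module W (equivalently, representation of h on W) and every w in W
   there is a unique U(h)-module map V -> W sending v to w. *)
Definition free_rank1_Uh (V : lmodType F) (rho : Tbasis -> V -> V) :=
  exists v : V,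
    forall (W : lmodType F) (sigma : Tbasis -> W -> W),
      is_rep_on in_h sigma ->
      forall w : W,
        exists! phi : V -> W,
          [/\ linearF phi,
              (forall a, in_h a -> forall u, phi (rho a u) = sigma a (phi u))
            & phi v = w].

(* The module M_t(lambda, alpha) on V = C[d^2] (+) d C[d^2], where an element
   f(d^2) + d g(d^2) is represented by the pair (f, g) of polynomials in x = d^2.
   s is the fixed square root lambda^{1/2}; lambda^p := s^(2p). *)
Definition shiftp (f : {poly F}) (c : F) : {poly F} := f \Po ('X + c%:P).

Definition Mact (t s alpha : F) (a : Tbasis) (v : {poly F} * {poly F})
    : {poly F} * {poly F} :=
  let: (f, g) := v in
  match a with
  | TL m =>
      let c := m%:~R in
      ((exprz s (2 * m)) *: (('X + (c * alpha)%:P) * shiftp f c),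
       (exprz s (2 * m)) *: (('X + (c * (alpha + half))%:P) * shiftp g c))
  | TI k =>
      let r := Iidx k in
      ((- 2 * exprz t (2 * k + 1) * exprz s (2 * k + 1) * alpha) *: shiftp f r,
       (exprz t (2 * k + 1) * exprz s (2 * k + 1) * (1 - 2 * alpha)) *: shiftp g r)
  | TG n =>
      let p := Gidx n in
      ((exprz (- t) n * exprz s n) *: (('X + (n%:~R * alpha)%:P) * shiftp g p),
       (exprz t n * exprz s n) *: shiftp f p)
  end.

Definition Veven : pred ({poly F} * {poly F}) := fun v => v.2 == 0.
Definition Vodd : pred ({poly F} * {poly F}) := fun v => v.1 == 0.

End Bracket.

(* Main.v *)
Require Import Defs.
From HB Require Import structures.
From mathcomp Require Import all_boot all_order all_algebra.
From mathcomp Require Import complex.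
From mathcomp Require Import reals.
From mathcomp Require Import ring lra zify.
From Stdlib Require Import FunctionalExtensionality.
Import Order.TTheory GRing.Theory Num.Theory.
Local Open Scope ring_scope.

Section Gen.
Variable F : fieldType.
Variable W : lmodType F.

Lemma linF_0 (U : lmodType F) (h : U -> W) : linearF h -> h 0 = 0.
Proof.
move=> hl; have := hl 1 0 0; rewrite scale1r addr0.
by move=> /(congr1 (fun x => x - h 0)); rewrite subrr addrK scale1r => /esym.
Qed.

Lemma linF_D (U : lmodType F) (h : U -> W) : linearF h -> forall u v, h (u + v) = h u + h v.
Proof. by move=> hl u v; have := hl 1 u v; rewrite !scale1r. Qed.

Lemma linF_Z (U : lmodType F) (h : U -> W) : linearF h -> forall c u, h (c *: u) = c *: h u.
Proof. by move=> hl c u; have := hl c u 0; rewrite !addr0 linF_0 // addr0. Qed.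

Lemma linF_sum (U : lmodType F) (h : U -> W) : linearF h -> forall n (c : nat -> F) (v : nat -> U),
  h (\sum_(i < n) c i *: v i) = \sum_(i < n) c i *: h (v i).
Proof.
move=> hl; elim=> [|n IH] c v; first by rewrite !big_ord0 linF_0.
by rewrite !big_ord_recr /= linF_D // IH linF_Z.
Qed.

Definition Ev (L : W -> W) (w : W) (p : {poly F}) : W :=
  \sum_(i < size p) p`_i *: iter i L w.

Lemma Ev_widen L w (p : {poly F}) n : (size p <= n)%N ->
  Ev L w p = \sum_(i < n) p`_i *: iter i L w.
Proof.
move=> hn; rewrite /Ev (big_ord_widen n (fun i => p`_i *: iter i L w) hn).
rewrite big_mkcond; apply: eq_bigr => i _; case: ifP => // /negbT.
by rewrite -leqNgt => hi; rewrite nth_default // scale0r.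
Qed.

Lemma Ev_lin L w c (p q : {poly F}) : Ev L w (c *: p + q) = c *: Ev L w p + Ev L w q.
Proof.
set n := maxn (size p) (size q).
have hp : (size p <= n)%N by rewrite leq_maxl.
have hq : (size q <= n)%N by rewrite leq_maxr.
have hpq : (size (c *: p + q)%R <= n)%N.
  apply: (leq_trans (size_polyD (c *: p) q)); rewrite geq_max hq andbT.
  exact: (leq_trans (size_scale_leq c p) hp).
rewrite (@Ev_widen L w p n hp) (@Ev_widen L w q n hq) (@Ev_widen L w _ n hpq) scaler_sumr -big_split /=.
by apply: eq_bigr => i _; rewrite coefD coefZ scalerDl scalerA.
Qed.

Lemma Ev_X L w (p : {poly F}) : linearF L -> Ev L w (p * 'X) = L (Ev L w p).
Proof.
move=> hl.
have h : (size (p * 'X)%R <= (size p).+1)%N.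
  apply: (leq_trans (size_polyMleq p 'X)); rewrite size_polyX addn2 /=; done.
rewrite (@Ev_widen L w _ _ h) big_ord_recl /= coefMX /= scale0r add0r /Ev linF_sum //.
by apply: eq_bigr => i _; rewrite coefMX /= add0n.
Qed.

Lemma Ev_1 L w : Ev L w 1 = w.
Proof. by rewrite /Ev size_poly1 big_ord1 /= coefC /= scale1r. Qed.

End Gen.
Arguments Ev {F W}.
Arguments linF_0 {F W U h}.
Arguments linF_D {F W U h}.
Arguments linF_Z {F W U h}.

Section S.
Variable R : realType.
Local Notation C := (R[i]).
Local Notation P := ({poly C} * {poly C})%type.

Lemma poly_eval_ext (p q : {poly C}) : (forall x, p.[x] = q.[x]) -> p = q.
Proof.
move=> h; apply/eqP; rewrite -subr_eq0; apply/negPn/negP => nz.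
pose rs : seq C := [seq i%:R | i <- iota 0 (size (p - q))].
have A : all (root (p - q)) rs.
  by apply/allP => y _; rewrite /root hornerD hornerN h subrr.
have U : uniq rs.
  rewrite map_inj_uniq ?iota_uniq // => i j /eqP; rewrite eqr_nat => /eqP.
  by [].
by have := max_poly_roots nz A U; rewrite size_map size_iota ltnn.
Qed.

Lemma pair_ext (u v : P) : u.1 = v.1 -> u.2 = v.2 -> u = v.
Proof. by case: u v => [a b] [c d] /= -> ->. Qed.

Ltac unify_args p :=
  repeat match goal with
  | |- context[ @horner _ p ?a ] => match goal with
     | |- context[ @horner _ p ?b ] => assert_fails (constr_eq a b);
         assert (Hunif : b = a); [by field | rewrite Hunif; clear Hunif]
     end end.


Lemma oddzB1 (z:int) : odd `|z - 1| = ~~ odd `|z|.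
Proof.
case: z => [[|n]|n].
- by [].
- by rewrite -addn1 PoszD addrK /= oddD addbT negbK.
- have -> : Negz n - 1 = Negz n.+1 by rewrite !NegzE; lia.
  by rewrite /= negbK.
Qed.

Lemma even2 (z:int) : ~~ odd `|z| -> (2 %| z)%Z.
Proof. by move=> h; rewrite dvdzE /= dvdn2. Qed.

Lemma sgn2 (k : int) : (-1 : C) ^ (2 * k) = 1.
Proof. by rewrite expN1r abszM /= -signr_odd oddM /= expr0. Qed.

Lemma sgn_cases (k : int) : (-1 : C) ^ k = 1 \/ (-1 : C) ^ k = -1.
Proof. by rewrite expN1r -signr_odd; case: (odd _); [right|left]; rewrite ?expr1 ?expr0. Qed.

Ltac fin f g sn0 N1 :=
 apply: pair_ext => /=; apply: poly_eval_ext => x;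
 rewrite /shiftp !(horner_comp, hornerD, hornerN, hornerM, hornerZ, hornerX, hornerC) /Iidx /Gidx /Defs.half;
 rewrite ?mulrDr ?(expfzDr _ _ sn0) ?opprK ?exp1rz ?(expfzDr _ _ N1) ?sgn2;
 unify_args f; unify_args g; by field.



Ltac finGG f g sn0 N1 n1 ht :=
 case: ht => ->; rewrite /=; apply: pair_ext => /=; apply: poly_eval_ext => x;
 rewrite /shiftp !(horner_comp, hornerD, hornerN, hornerM, hornerZ, hornerX, hornerC) /Iidx /Gidx /Defs.half;
 rewrite ?mulrDr ?(expfzDr _ _ sn0) ?opprK ?exp1rz ?(expfzDr _ _ N1) ?sgn2 -?invr_expz;
 unify_args f; unify_args g; case: (sgn_cases n1) => ->; field;
 rewrite ?expfz_neq0 ?oppr_eq0 ?oner_eq0 //.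

Lemma rep_GG (t s alpha : C) (ht : t = 1 \/ t = -1) (sn0 : s != 0) n1 n2 f g :
  Mact t s alpha (TG n1) (Mact t s alpha (TG n2) (f, g)) - Tsign C (TG n1) (TG n2) *: Mact t s alpha (TG n2) (Mact t s alpha (TG n1) (f, g))
  = (Tbracket C (TG n1) (TG n2)).1 *: Mact t s alpha (Tbracket C (TG n1) (TG n2)).2 (f, g).
Proof.
have N1 : (-1 : C) != 0 by rewrite oppr_eq0 oner_eq0.
rewrite /Tsign /Tbracket /=; case: ifP => hp.
- have h2 := even2 _ hp.
  have E := divzK h2; set q := ((n1 + n2) %/ 2)%Z in E *; clearbody q.
  have -> : n2 = 2 * q - n1 by rewrite mulrC E addrC addKr.
  finGG f g sn0 N1 n1 ht.
- have h2 : (2 %| n1 + n2 - 1)%Z by apply: even2; rewrite oddzB1 negbK; move/negbT: hp; rewrite negbK.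
  have E := divzK h2; set q := ((n1 + n2 - 1) %/ 2)%Z in E *; clearbody q.
  have -> : n2 = 2 * q + 1 - n1 by rewrite mulrC E; ring.
  finGG f g sn0 N1 n1 ht.
Qed.

Lemma Mact_L0 t s alpha (f g : {poly C}) : Mact t s alpha (TL 0) (f, g) = (f * 'X, g * 'X).
Proof.
apply: pair_ext; apply: poly_eval_ext => x;
rewrite /= /shiftp !(horner_comp, hornerD, hornerN, hornerM, hornerZ, hornerX, hornerC) /Iidx /Gidx /Defs.half.
all: rewrite ?mulr0 ?mul0r ?expr0z ?addr0 ?mul1r ?mul0r ?addr0.
all: first [done | by rewrite mulrC].
Qed.

Lemma Mact_G0 t s alpha (f g : {poly C}) : Mact t s alpha (TG 0) (f, g) = (g * 'X, f).
Proof.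
apply: pair_ext; apply: poly_eval_ext => x;
rewrite /= /shiftp !(horner_comp, hornerD, hornerN, hornerM, hornerZ, hornerX, hornerC) /Iidx /Gidx /Defs.half.
all: rewrite ?mulr0 ?mul0r ?expr0z ?addr0 ?mul1r ?mul0r ?addr0.
all: first [done | by rewrite mulrC].
Qed.

Lemma rep_br (t s alpha : C) (ht : t = 1 \/ t = -1) (sn0 : s != 0) a b (w : P) :
  Mact t s alpha a (Mact t s alpha b w) - Tsign C a b *: Mact t s alpha b (Mact t s alpha a w)
  = (Tbracket C a b).1 *: Mact t s alpha (Tbracket C a b).2 w.
Proof.
have N1 : (-1 : C) != 0 by rewrite oppr_eq0 oner_eq0.
case: w => f g; case: a => [m|k|n1]; case: b => [m'|k'|n2]; last exact: rep_GG.
all: case: ht => ->; rewrite /Tsign /=; by fin f g sn0 N1.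
Qed.

Lemma pSD1 c (u v : P) : (c *: u + v).1 = c *: u.1 + v.1. Proof. by []. Qed.
Lemma pSD2 c (u v : P) : (c *: u + v).2 = c *: u.2 + v.2. Proof. by []. Qed.

Lemma Mact_lin (t s alpha : C) a : linearF (Mact t s alpha a).
Proof.
move=> c [f1 g1] [f2 g2].
have -> : c *: (f1, g1) + (f2, g2) = (c *: f1 + f2, c *: g1 + g2) by [].
case: a => [m|k|n]; apply: pair_ext => /=; apply: poly_eval_ext => x;
rewrite /shiftp !(horner_comp, hornerD, hornerN, hornerM, hornerZ, hornerX, hornerC); ring.
Qed.

Lemma Mact_grade_even (t s alpha : C) a (w : P) : w \in Veven (F:=C) ->
  Mact t s alpha a w \in (if Tpar a then Vodd (F:=C) else Veven (F:=C)).
Proof.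
case: w => f g; rewrite !unfold_in /Veven /Vodd /= => /eqP ->.
by case: a => [m|k|n] /=; rewrite /shiftp comp_poly0 ?mulr0 scaler0 eqxx.
Qed.

Lemma Mact_grade_odd (t s alpha : C) a (w : P) : w \in Vodd (F:=C) ->
  Mact t s alpha a w \in (if Tpar a then Veven (F:=C) else Vodd (F:=C)).
Proof.
case: w => f g; rewrite !unfold_in /Veven /Vodd /= => /eqP ->.
by case: a => [m|k|n] /=; rewrite /shiftp comp_poly0 ?mulr0 scaler0 eqxx.
Qed.

Lemma free_part (t s alpha : C) : free_rank1_Uh (Mact t s alpha).
Proof.
exists (1, 0) => W sigma [hlin hbr] w.
pose L := sigma (TL 0); pose A := sigma (TG 0).
have hL : linearF L by apply: hlin.
have hA : linearF A by apply: hlin.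
have LA : forall u, L (A u) = A (L u).
  move=> u; have := hbr (TL 0) (TG 0) isT isT u.
  rewrite /Tsign /Tbracket /= /Gidx subrr scale0r scale1r => /eqP.
  by rewrite subr_eq0 => /eqP.
have AA : forall u, A (A u) = L u.
  move=> u; have := hbr (TG 0) (TG 0) isT isT u.
  rewrite /Tsign /Tbracket /=.
  have -> : ((0 + 0) %/ 2)%Z = 0 by [].
  rewrite expr0z mulr1 scaleN1r opprK -mulr2n -scaler_nat => h.
  apply: (@scalerI _ _ 2); first by rewrite pnatr_eq0.
  by rewrite /= /L /A h.
pose phi := fun u : P => Ev L w u.1 + A (Ev L w u.2).
have Ev0 : Ev L w 0 = 0 by rewrite /Ev size_poly0 big_ord0.
have Pphi : [/\ linearF phi,
     (forall a, in_h a -> forall u, phi (Mact t s alpha a u) = sigma a (phi u))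
   & phi (1, 0) = w].
  split.
  - move=> c [f1 g1] [f2 g2]; rewrite /phi pSD1 pSD2 /= !Ev_lin (linF_D hA) (linF_Z hA).
    by rewrite scalerDr addrACA.
  - case=> [m|k|n] //= /eqP -> [f g].
    + by rewrite Mact_L0 /phi /= !Ev_X // -/L (linF_D hL) LA.
    + by rewrite Mact_G0 /phi /= Ev_X // -/A (linF_D hA) AA addrC.
  - by rewrite /phi /= Ev_1 Ev0 (linF_0 hA) addr0.
exists phi; split => // psi [hpl hpi hpv].
have h1 : forall f, psi (f, 0) = Ev L w f.
  elim/poly_ind => [|p c IH].
    by rewrite Ev0 (linF_0 hpl).
  have -> : (p * 'X + c%:P, 0) = c *: (1, 0) + Mact t s alpha (TL 0) (p, 0).
    by rewrite Mact_L0; apply: pair_ext; rewrite /= ?mul0r ?scaler0 ?addr0 // addrC -alg_polyC.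
  by rewrite (linF_D hpl) (linF_Z hpl) hpv hpi // IH -alg_polyC [in RHS]addrC Ev_lin Ev_1 Ev_X // addrC.
have h2 : forall g, psi (0, g) = A (Ev L w g).
  move=> g; have -> : ((0 : {poly C}), g) = Mact t s alpha (TG 0) (g, 0).
    by rewrite Mact_G0 mul0r.
  by rewrite hpi // h1.
apply: functional_extensionality => -[f g]; rewrite /phi /=.
have -> : (f, g) = 1 *: (f, 0) + (0, g).
  by apply: pair_ext; rewrite /= ?scale1r ?addr0 ?add0r ?scaler0.
by rewrite hpl scale1r h1 h2.
Qed.

End S.

Theorem proposition2p3 (R : realType) (lambda s alpha t : R[i])
  (hlam : lambda != 0) (hs : s ^+ 2 = lambda) (ht : t = 1 \/ t = -1) :
  is_T_module (Veven (F := R[i])) (Vodd (F := R[i])) (Mact t s alpha) /\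
  free_rank1_Uh (Mact t s alpha).
Proof.
have sn0 : s != 0 by apply: contraNneq hlam => s0; rewrite -hs s0 expr0n.
split; last exact: free_part.
split; first split.
- by move=> a _; exact: Mact_lin.
- by move=> a b _ _ w; exact: rep_br.
- by split=> a w; [exact: Mact_grade_even | exact: Mact_grade_odd].
Qed.
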